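(* For all positive integers $n,d$ there exists a term $t_{n,d}$ in $n$ variables in the language $\{0,1,\vee,\wedge,-\}$ such that for every co-Heyting algebra $L$ generated by some $a\in L^n$, the ideal $dL$ is principal and $t_{n,d}(a)=\varepsilon_d(L)$.
   Context: A co-Heyting algebra is a bounded distributive lattice $(L,0,1,\vee,\wedge)$ such that $a-b=\min\{c\in L: a\le b\vee c\}$ exists for all $a,b$. $\operatorname{Spec}L$ is the set of prime filters ordered by inclusion; the height of a prime filter is its foundation rank there (rank $\ge\beta+1$ iff some strictly smaller prime filter has rank $\ge\beta$; limits by intersection); $\operatorname{codim}_La=\min\{\operatorname{height}\mathfrak p: a\in\mathfrak p\}$ ($+\infty$ if none). $dL=\{a\in L:\operatorname{codim}_La\ge d\}$ is an ideal, and $\varepsilon_d(L)$ denotes its generator when it is principal. *)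

(* Defs.v *)
From Stdlib Require Import Arith.

Set Implicit Arguments.
Unset Strict Implicit.

(* A co-Heyting algebra: a bounded distributive lattice (0,1,join,meet)
   together with a difference  a - b = min { c | a <= b \/ c }. *)
Record coHeytingAlgebra := CoHeyting {
  car :> Type;
  zero : car;
  one : car;
  join : car -> car -> car;
  meet : car -> car -> car;
  diff : car -> car -> car;
  joinA : forall a b c, join a (join b c) = join (join a b) c;
  joinC : forall a b, join a b = join b a;
  meetA : forall a b c, meet a (meet b c) = meet (meet a b) c;
  meetC : forall a b, meet a b = meet b a;
  join_meet_absorb : forall a b, join a (meet a b) = a;
  meet_join_absorb : forall a b, meet a (join a b) = a;
  meet_join_distr : forall a b c, meet a (join b c) = join (meet a b) (meet a c);
  join0 : forall a, join a zero = a;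
  meet1 : forall a, meet a one = a;
  (* order: x <= y  iff  meet x y = x *)
  diff_cover : forall a b, meet a (join b (diff a b)) = a;
  diff_min : forall a b c, meet a (join b c) = a -> meet (diff a b) c = diff a b
}.

Definition le (L : coHeytingAlgebra) (x y : L) : Prop := meet x y = x.

Inductive term (n : nat) : Type :=
| tVar : forall i : nat, i < n -> term n
| tZero : term n
| tOne : term n
| tJoin : term n -> term n -> term n
| tMeet : term n -> term n -> term n
| tDiff : term n -> term n -> term n.

Fixpoint eval (n : nat) (L : coHeytingAlgebra) (a : forall i : nat, i < n -> L)
  (t : term n) : L :=
  match t with
  | @tVar _ i Hi => a i Hi
  | tZero _ => zero L
  | tOne _ => one L
  | tJoin t1 t2 => join (eval a t1) (eval a t2)
  | tMeet t1 t2 => meet (eval a t1) (eval a t2)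
  | tDiff t1 t2 => diff (eval a t1) (eval a t2)
  end.

Definition generated_by (n : nat) (L : coHeytingAlgebra)
  (a : forall i : nat, i < n -> L) : Prop :=
  forall x : L, exists t : term n, eval a t = x.

Definition is_filter (L : coHeytingAlgebra) (F : L -> Prop) : Prop :=
  F (one L) /\
  (forall x y, le x y -> F x -> F y) /\
  (forall x y, F x -> F y -> F (meet x y)).

Definition is_prime_filter (L : coHeytingAlgebra) (F : L -> Prop) : Prop :=
  is_filter F /\ ~ F (zero L) /\
  (forall x y, F (join x y) -> F x \/ F y).

Definition strict_incl (L : coHeytingAlgebra) (P Q : L -> Prop) : Prop :=
  (forall x, P x -> Q x) /\ exists x, Q x /\ ~ P x.

(* height_ge k p  <->  height p >= k  (for finite k), following the
   foundation-rank clause: rank >= k+1 iff some strictly smaller prime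
   filter has rank >= k. *)
Fixpoint height_ge (L : coHeytingAlgebra) (k : nat) (p : L -> Prop) : Prop :=
  match k with
  | O => True
  | S k' => exists q : L -> Prop,
      is_prime_filter q /\ strict_incl q p /\ height_ge k' q
  end.

(* codim_L a >= d : every prime filter containing a has height >= d
   (min over an empty set is +infinity). *)
Definition codim_ge (L : coHeytingAlgebra) (d : nat) (a : L) : Prop :=
  forall p : L -> Prop, is_prime_filter p -> p a -> height_ge d p.

Definition dL (L : coHeytingAlgebra) (d : nat) : L -> Prop := codim_ge d.

(* Main.v *)
Require Import Defs.
From Stdlib Require Import Classical List Arith Lia FunctionalExtensionality PropExtensionality.
From mathcomp Require classical_sets.
Import ListNotations.


Lemma zorn_max (T:Type) (Good : (T -> Prop) -> Prop) :
 (forall J, Good J -> exists x, J x) ->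
 (forall F : (T -> Prop) -> Prop, (exists J, F J) -> (forall J, F J -> Good J) ->
    (forall J1 J2, F J1 -> F J2 -> (forall x, J1 x -> J2 x) \/ (forall x, J2 x -> J1 x)) ->
    Good (fun x => exists J, F J /\ J x)) ->
 (exists J, Good J) ->
 exists A, Good A /\ forall B, Good B -> (forall x, A x -> B x) -> forall x, B x -> A x.
Proof.
intros Hne Hch [J0 HJ0].
destruct (@classical_sets.Zorn_bigcup T (fun J => (forall x, ~ J x) \/ Good J)) as [A [PA HA]].
- intros F HF Htot.
  destruct (classic (exists J, F J /\ Good J)) as [[J1 [FJ1 GJ1]]|Hno].
  + right.
    set (F' := fun J => F J /\ Good J).
    assert (E: forall x, classical_sets.bigcup F (fun X => X) x <-> exists J, F' J /\ J x).
    { intro x; split.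
      - intros [X FX Xx]. exists X. split; [split|]; auto.
        destruct (HF X FX) as [H|H]; [destruct (H x Xx)|exact H].
      - intros [J [[FJ _] Jx]]. exists J; auto. }
    assert (G: Good (fun x => exists J, F' J /\ J x)).
    { apply Hch.
      - exists J1; split; auto.
      - intros J [_ H]; exact H.
      - intros Ja Jb [Fa _] [Fb _]. destruct (Htot Ja Jb Fa Fb); auto. }
    replace (classical_sets.bigcup F (fun X => X)) with (fun x => exists J, F' J /\ J x); [exact G|].
    apply FunctionalExtensionality.functional_extensionality; intro x.
    apply PropExtensionality.propositional_extensionality. symmetry; apply E.
  + left. intros x [X FX Xx].
    destruct (HF X FX) as [H|H]; [exact (H x Xx)|].
    apply Hno; exists X; auto.
- destruct PA as [Hemp|GA].
  + exfalso. destruct (Hne J0 HJ0) as [x0 Hx0].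
    apply (HA J0); [|right; exact HJ0].
    split.
    * intros t Ht; destruct (Hemp t Ht).
    * intro H. exact (Hemp x0 (H x0 Hx0)).
  + exists A; split; auto.
    intros B GB AB x Bx.
    apply NNPP; intro nAx.
    apply (HA B); [|right; exact GB].
    split; [exact AB|]. intro H. apply nAx. apply H. exact Bx.
Qed.

Section Lat.
Context {L : coHeytingAlgebra}.
Implicit Types x y z a b c j : L.

Lemma meet_idem x : meet x x = x.
Proof. rewrite <- (join_meet_absorb x x) at 2. apply meet_join_absorb. Qed.
Lemma join_idem x : join x x = x.
Proof. rewrite <- (meet_join_absorb x x) at 2. apply join_meet_absorb. Qed.
Lemma le_refl x : le x x.
Proof. apply meet_idem. Qed.
Lemma le_trans x y z : le x y -> le y z -> le x z.
Proof. unfold le; intros H1 H2. rewrite <- H1, <- meetA, H2. reflexivity. Qed.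
Lemma le_antisym x y : le x y -> le y x -> x = y.
Proof. unfold le; intros H1 H2. rewrite <- H1, meetC. exact H2. Qed.
Lemma le_join x y : le x y <-> join x y = y.
Proof. unfold le; split; intro H.
- rewrite <- H, joinC, meetC. apply join_meet_absorb.
- rewrite <- H. apply meet_join_absorb. Qed.
Lemma meet_lb1 x y : le (meet x y) x.
Proof. unfold le. rewrite (meetC x y), <- meetA, meet_idem. reflexivity. Qed.
Lemma meet_lb2 x y : le (meet x y) y.
Proof. rewrite meetC. apply meet_lb1. Qed.
Lemma join_ub1 x y : le x (join x y).
Proof. apply meet_join_absorb. Qed.
Lemma join_ub2 x y : le y (join x y).
Proof. rewrite joinC. apply join_ub1. Qed.
Lemma meet_glb x y z : le z x -> le z y -> le z (meet x y).
Proof. unfold le; intros H1 H2. rewrite meetA, H1, H2. reflexivity. Qed.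
Lemma join_lub x y z : le x z -> le y z -> le (join x y) z.
Proof. rewrite !le_join; intros H1 H2. rewrite <- joinA, H2, H1. reflexivity. Qed.
Lemma le_one x : le x (one L).
Proof. apply meet1. Qed.
Lemma le_zero x : le (zero L) x.
Proof. apply le_join. rewrite joinC. apply join0. Qed.
Lemma meet_mono x y x' y' : le x x' -> le y y' -> le (meet x y) (meet x' y').
Proof. intros; apply meet_glb; eapply le_trans; [apply meet_lb1|assumption|apply meet_lb2|assumption]. Qed.
Lemma join_mono x y x' y' : le x x' -> le y y' -> le (join x y) (join x' y').
Proof. intros; apply join_lub; eapply le_trans; [eassumption|apply join_ub1|eassumption|apply join_ub2]. Qed.
Lemma meet_join_distr_r a b c : meet (join b c) a = join (meet b a) (meet c a).
Proof. rewrite meetC, meet_join_distr, (meetC a b), (meetC a c). reflexivity. Qed.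


Lemma join_meet_distr j x y : meet (join j x) (join j y) = join j (meet x y).
Proof.
rewrite meet_join_distr_r, meet_join_absorb, meet_join_distr, joinA, (meetC x j), join_meet_absorb. reflexivity.
Qed.
Lemma diff_le a b : le a (join b (diff a b)).
Proof. apply diff_cover. Qed.
Lemma diff_least a b c : le a (join b c) -> le (diff a b) c.
Proof. apply diff_min. Qed.
End Lat.

Section Pr.
Context {L : coHeytingAlgebra}.
Implicit Types x y z a b c j : L.
Notation prime := (@is_prime_filter L).

Lemma pr_one {p : L -> Prop} (P : prime p) : p (one L).
Proof. destruct P as [[H _] _]; exact H. Qed.
Lemma pr_up {p : L -> Prop} (P : prime p) x y : le x y -> p x -> p y.
Proof. destruct P as [[_ [H _]] _]; apply H. Qed.
Lemma pr_meet {p : L -> Prop} (P : prime p) x y : p x -> p y -> p (meet x y).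
Proof. destruct P as [[_ [_ H]] _]; apply H. Qed.
Lemma pr_zero {p : L -> Prop} (P : prime p) : ~ p (zero L).
Proof. destruct P as [_ [H _]]; exact H. Qed.
Lemma pr_join {p : L -> Prop} (P : prime p) {x y} : p (join x y) -> p x \/ p y.
Proof. destruct P as [_ [_ H]]; apply H. Qed.
Lemma pr_meet_iff {p : L -> Prop} (P : prime p) x y : p (meet x y) <-> p x /\ p y.
Proof. split.
- intro H; split; eapply (pr_up P); eauto; [apply meet_lb1|apply meet_lb2].
- intros [H1 H2]; apply (pr_meet P); auto. Qed.
Lemma pr_join_iff {p : L -> Prop} (P : prime p) x y : p (join x y) <-> p x \/ p y.
Proof. split.
- apply (pr_join P).
- intros [H|H]; eapply (pr_up P); eauto; [apply join_ub1|apply join_ub2]. Qed.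
Lemma prime_ext (p q : L -> Prop) : (forall x, p x <-> q x) -> prime p -> prime q.
Proof.
intros E [[H1 [H2 H3]] [H4 H5]]. split; [split; [|split]|split].
- apply E; auto.
- intros x y Hxy Hx. apply E. apply (H2 x y Hxy). apply E; auto.
- intros x y Hx Hy. apply E. apply H3; apply E; auto.
- intro H. apply H4. apply E; auto.
- intros x y H. destruct (H5 x y) as [K|K]; [apply E; auto| left|right]; apply E; auto.
Qed.

Lemma pft (F I : L -> Prop) :
  F (one L) -> (forall x y, le x y -> F x -> F y) -> (forall x y, F x -> F y -> F (meet x y)) ->
  I (zero L) -> (forall x y, le x y -> I y -> I x) -> (forall x y, I x -> I y -> I (join x y)) ->
  (forall x, F x -> I x -> False) ->
  exists q, prime q /\ (forall x, F x -> q x) /\ (forall x, I x -> ~ q x).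
Proof.
intros F1 Fup Fmeet I0 Idown Ijoin Disj.
set (Good := fun J : L -> Prop => (forall x, I x -> J x) /\ J (zero L) /\
     (forall x y, le x y -> J y -> J x) /\ (forall x y, J x -> J y -> J (join x y)) /\
     (forall x, F x -> J x -> False)).
destruct (@zorn_max L Good) as [A [[AI [A0 [Adown [Ajoin AF]]]] Amax]].
- intros J [_ [H _]]. exists (zero L); exact H.
- intros Fm [J0 FJ0] HG Htot. split; [|split; [|split; [|split]]].
  + intros x Ix. exists J0; split; auto. apply (HG J0 FJ0); auto.
  + exists J0; split; auto. apply (HG J0 FJ0).
  + intros x y Hxy [J [FJ Jy]]. exists J; split; auto. apply (HG J FJ) with y; auto.
  + intros x y [J1 [F1' J1x]] [J2 [F2' J2y]].
    destruct (Htot J1 J2 F1' F2') as [S|S].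
    * exists J2; split; auto. apply (HG J2 F2'); auto.
    * exists J1; split; auto. apply (HG J1 F1'); auto.
  + intros x Fx [J [FJ Jx]]. apply (HG J FJ) with x; auto.
- exists I; repeat split; auto.
-
  assert (Ext : forall x, ~ A x -> exists f j, F f /\ A j /\ le f (join j x)).
  { intros x nAx. apply NNPP; intro Hno. apply nAx.
    set (B := fun z => exists j, A j /\ le z (join j x)).
    assert (GB : Good B).
    { split; [|split; [|split; [|split]]].
      - intros z Iz. exists z; split; [apply AI; auto|apply join_ub1].
      - exists (zero L); split; auto. apply le_zero.
      - intros u v Huv [j [Aj Hv]]. exists j; split; auto. eapply le_trans; eauto.
      - intros u v [j1 [Aj1 H1]] [j2 [Aj2 H2]]. exists (join j1 j2); split; auto.
        apply join_lub.
        + eapply le_trans; [apply H1|]. apply join_mono; [apply join_ub1|apply le_refl].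
        + eapply le_trans; [apply H2|]. apply join_mono; [apply join_ub2|apply le_refl].
      - intros f Ff [j [Aj Hf]]. apply Hno. exists f, j; auto. }
    apply (Amax B GB).
    - intros z Az. exists z; split; auto. apply join_ub1.
    - exists (zero L); split; auto. rewrite joinC, join0. apply le_refl. }
  exists (fun x => ~ A x). split; [split; [split; [|split]|split]|split].
  + intro H. apply (AF (one L)); auto.
  + intros x y Hxy nAx Ay. apply nAx. apply Adown with y; auto.
  + intros x y nAx nAy Axy.
    destruct (Ext x nAx) as [f [j1 [Ff [Aj1 H1]]]].
    destruct (Ext y nAy) as [f' [j2 [Ff' [Aj2 H2]]]].
    apply (AF (meet f f')). apply Fmeet; auto.
    apply Adown with (join (join j1 j2) (meet x y)); [|apply Ajoin; auto].
    rewrite <- join_meet_distr. apply meet_mono.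
    * eapply le_trans; [apply H1|]. apply join_mono; [apply join_ub1|apply le_refl].
    * eapply le_trans; [apply H2|]. apply join_mono; [apply join_ub2|apply le_refl].
  + intro H; apply H; exact A0.
  + intros x y H. apply NNPP; intro K. apply H. apply Ajoin; apply NNPP; intro K'; apply K; auto.
  + intros x Fx Ax. apply (AF x); auto.
  + intros x Ix nAx. apply nAx; auto.
Qed.

Lemma diff_down (p : L -> Prop) x y : prime p -> p (diff x y) ->
  exists q, prime q /\ (forall z, q z -> p z) /\ q x /\ ~ q y.
Proof.
intros P Hd.
destruct (@pft (fun z => le x z) (fun z => exists w, ~ p w /\ le z (join y w))) as [q [Q [QF QI]]].
- apply le_one.
- intros u v H1 H2. eapply le_trans; eauto.
- intros u v; apply meet_glb.
- exists (zero L); split; [apply (pr_zero P)|apply le_zero].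
- intros u v Huv [w [Hw Hv]]. exists w; split; auto. eapply le_trans; eauto.
- intros u v [w1 [H1 K1]] [w2 [H2 K2]]. exists (join w1 w2); split.
  + intro H. destruct (pr_join P H); auto.
  + apply join_lub.
    * eapply le_trans; [apply K1|]. apply join_mono; [apply le_refl|apply join_ub1].
    * eapply le_trans; [apply K2|]. apply join_mono; [apply le_refl|apply join_ub2].
- intros z Hxz [w [Hw Hz]]. apply Hw. apply (pr_up P (diff x y)); auto.
  apply diff_least. eapply le_trans; eauto.
- exists q; split; auto. split; [|split].
  + intros z qz. apply NNPP; intro npz. apply (QI z); auto. exists z; split; auto. apply join_ub2.
  + apply QF. apply le_refl.
  + apply QI. exists (zero L); split; [apply (pr_zero P)|]. rewrite join0. apply le_refl.
Qed.

Lemma diff_up (p q : L -> Prop) x y : prime q -> (forall z, q z -> p z) -> q x -> ~ q y -> p (diff x y).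
Proof.
intros Q Hqp Hx Hy. apply Hqp.
destruct (pr_join Q (y:=diff x y) (x:=y)) as [H|H]; auto.
- apply (pr_up Q x); auto. apply diff_le.
- contradiction.
Qed.

Lemma pft_le x y : ~ le x y -> exists p, prime p /\ p x /\ ~ p y.
Proof.
intro H.
destruct (@pft (fun z => le x z) (fun z => le z y)) as [q [Q [QF QI]]].
- apply le_one.
- intros u v H1 H2. eapply le_trans; eauto.
- intros u v; apply meet_glb.
- apply le_zero.
- intros u v H1 H2. eapply le_trans; eauto.
- intros; apply join_lub; auto.
- intros z H1 H2. apply H. eapply le_trans; eauto.
- exists q; split; auto. split; [apply QF; apply le_refl| apply QI; apply le_refl].
Qed.

Lemma min_prime (q : L -> Prop) e : prime q -> q e ->
  exists q', prime q' /\ (forall z, q' z -> q z) /\ q' e /\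
    forall q'', prime q'' -> (forall z, q'' z -> q' z) -> q'' e -> forall z, q' z -> q'' z.
Proof.
intros Q Qe.
set (Good := fun J : L -> Prop => prime (fun x => ~ J x) /\ (forall x, ~ J x -> q x) /\ ~ J e).
destruct (@zorn_max L Good) as [A [[PA [Aq Ae]] Amax]].
- intros J [P _]. exists (zero L). apply NNPP. apply (pr_zero P).
- intros Fm [J0 FJ0] HG Htot. split; [|split].
  + split; [split; [|split]|split].
    * intros [J [FJ Jx]]. apply (pr_one (proj1 (HG J FJ))); auto.
    * intros x y Hxy nUx [J [FJ Jy]]. apply nUx. exists J; split; auto.
      apply NNPP; intro nJx. apply (pr_up (proj1 (HG J FJ)) x y); auto.
    * intros x y nUx nUy [J [FJ Jxy]].
      apply (pr_meet (proj1 (HG J FJ)) x y); auto; intro; [apply nUx|apply nUy]; exists J; auto.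
    * intro H. apply H. exists J0; split; auto. apply NNPP; apply (pr_zero (proj1 (HG J0 FJ0))).
    * intros x y nU. apply NNPP; intro K. apply not_or_and in K. destruct K as [K1 K2].
      apply NNPP in K1. apply NNPP in K2. destruct K1 as [J1 [F1 J1x]]. destruct K2 as [J2 [F2 J2y]].
      destruct (Htot J1 J2 F1 F2) as [S|S].
      -- assert (PJ := proj1 (HG J2 F2)).
         destruct (pr_join PJ (x:=x) (y:=y)) as [K|K].
         ++ intro H. apply nU. exists J2; auto.
         ++ apply K; auto.
         ++ apply K; auto.
      -- assert (PJ := proj1 (HG J1 F1)).
         destruct (pr_join PJ (x:=x) (y:=y)) as [K|K].
         ++ intro H. apply nU. exists J1; auto.
         ++ apply K; auto.
         ++ apply K; auto.
  + intros x nU. apply (proj1 (proj2 (HG J0 FJ0))). intro; apply nU; exists J0; auto.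
  + intros [J [FJ Je]]. apply (proj2 (proj2 (HG J FJ))); auto.
- exists (fun x => ~ q x). split; [|split].
  + apply prime_ext with q; auto. intro x; split; intro H; [intro K; auto| apply NNPP; auto].
  + intros x H; apply NNPP; auto.
  + intro H; auto.
- exists (fun x => ~ A x). split; [exact PA|split; [exact Aq|split; [exact Ae|]]].
  intros q'' Q'' Hsub He z nAz.
  assert (GB : Good (fun x => ~ q'' x)).
  { split; [|split].
    - apply prime_ext with q''; auto. intro x; split; intro H; [intro K; auto| apply NNPP; auto].
    - intros x H. apply NNPP in H. apply Aq. apply Hsub; auto.
    - intro H; auto. }
  apply NNPP; intro nq. apply nAz. apply (Amax _ GB); auto.
  intros x Ax qx. apply (Hsub x qx). exact Ax.
Qed.
End Pr.

Section Terms.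
Variable n : nat.
Definition bigmeet (l : list (term n)) : term n := fold_right (@tMeet n) (tOne n) l.
Definition bigjoin (l : list (term n)) : term n := fold_right (@tJoin n) (tZero n) l.
Fixpoint vars_aux (k : nat) : list (term n) :=
  match k with
  | 0 => nil
  | S k' => match lt_dec k' n with
            | left H => tVar H :: vars_aux k'
            | right _ => vars_aux k'
            end
  end.
Definition vars := vars_aux n.
Fixpoint parts (l : list (term n)) : list (list (term n) * list (term n)) :=
  match l with
  | nil => [(nil, nil)]
  | t :: l' => map (fun pn => (t :: fst pn, snd pn)) (parts l') ++
               map (fun pn => (fst pn, t :: snd pn)) (parts l')
  end.
Definition chi (pn : list (term n) * list (term n)) : term n :=
  tDiff (bigmeet (fst pn)) (bigjoin (snd pn)).
Definition hint (l : list (term n)) := map chi (parts l).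
Fixpoint Lam (d : nat) : list (term n) :=
  match d with
  | 0 => vars ++ hint vars
  | S d' => (vars ++ Lam d' ++ hint (Lam d')) ++ hint (vars ++ Lam d' ++ hint (Lam d'))
  end.
Fixpoint E (d : nat) : term n :=
  match d with
  | 0 => tOne n
  | S d' => bigjoin (map (fun pn => tMeet (bigjoin (snd pn)) (tDiff (E d') (bigjoin (snd pn))))
                        (parts (Lam d')))
  end.

Lemma vars_aux_in k i (H : i < n) : i < k -> In (tVar H) (vars_aux k).
Proof.
induction k; intro Hk; [inversion Hk|]. simpl.
destruct (lt_dec k n) as [H0|H0].
- destruct (Nat.eq_dec i k) as [->|ne].
  + left. f_equal. apply Peano_dec.le_unique.
  + right. apply IHk. lia.
- apply IHk. destruct (Nat.eq_dec i k); [subst; contradiction|lia].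
Qed.
Lemma vars_in i (H : i < n) : In (tVar H) vars.
Proof. apply vars_aux_in; exact H. Qed.

Lemma parts_cover l pn : In pn (parts l) -> forall t, In t l -> In t (fst pn) \/ In t (snd pn).
Proof.
revert pn; induction l as [|t0 l IH]; intros pn Hpn t Ht; [destruct Ht|].
simpl in Hpn. apply in_app_or in Hpn. destruct Hpn as [Hp|Hp]; apply in_map_iff in Hp;
  destruct Hp as [pn' [<- Hpn']]; simpl; destruct Ht as [->|Ht]; auto;
  destruct (IH pn' Hpn' t Ht); auto.
Qed.

Lemma parts_exist (P : term n -> Prop) l : exists pn, In pn (parts l) /\
  (forall t, In t (fst pn) -> P t) /\ (forall t, In t (snd pn) -> ~ P t).
Proof.
induction l as [|t0 l IH].
- exists (nil, nil). simpl; repeat split; auto; intros t [].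
- destruct IH as [pn [Hin [H1 H2]]]. destruct (classic (P t0)) as [Pt|Pt].
  + exists (t0 :: fst pn, snd pn). split; [simpl; apply in_or_app; left; apply in_map_iff; eauto|].
    simpl; split; auto. intros t [->|K]; auto.
  + exists (fst pn, t0 :: snd pn). split; [simpl; apply in_or_app; right; apply in_map_iff; eauto|].
    simpl; split; auto. intros t [<-|K]; auto.
Qed.
End Terms.
Arguments vars {n}. Arguments bigmeet {n}. Arguments bigjoin {n}. Arguments parts {n}. Arguments chi {n}. Arguments hint {n}.
Arguments parts_cover {n}. Arguments parts_exist {n}. Arguments vars_in {n}.

Section Sem.
Variable n : nat.
Variable L : coHeytingAlgebra.
Variable a : forall i : nat, i < n -> L.
Notation ev := (eval a).
Notation prime := (@is_prime_filter L).

Lemma ev_bigmeet {p : L -> Prop} (P : prime p) l :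
  p (ev (bigmeet l)) <-> forall t, In t l -> p (ev t).
Proof.
induction l as [|t l IH]; simpl.
- split; [intros _ t []|intros; apply (pr_one P)].
- rewrite (pr_meet_iff P), IH. split.
  + intros [H1 H2] t' [<-|K]; auto.
  + intro H; split; auto.
Qed.
Lemma ev_bigjoin {p : L -> Prop} (P : prime p) l :
  p (ev (bigjoin l)) <-> exists t, In t l /\ p (ev t).
Proof.
induction l as [|t l IH]; simpl.
- split; [intro H; destruct ((pr_zero P) H)|intros [t [[] _]]].
- rewrite (pr_join_iff P), IH. split.
  + intros [H|[t' [K H]]]; eauto.
  + intros [t' [[<-|K] H]]; eauto.
Qed.

Definition matches (u : L -> Prop) (pn : list (term n) * list (term n)) :=
  (forall t, In t (fst pn) -> u (ev t)) /\ (forall t, In t (snd pn) -> ~ u (ev t)).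
Definition agree (l : list (term n)) (u v : L -> Prop) :=
  forall t, In t l -> (u (ev t) <-> v (ev t)).
Definition sub (u v : L -> Prop) := forall z, u z -> v z.
Definition equiv (u v : L -> Prop) := forall t, u (ev t) <-> v (ev t).

Lemma chi_spec {p : L -> Prop} (P : prime p) pn :
  p (ev (chi pn)) <-> exists u, prime u /\ sub u p /\ matches u pn.
Proof.
unfold chi; simpl. split.
- intro H. destruct (diff_down _ _ _ P H) as [q [Q [Hqp [H1 H2]]]].
  exists q; split; auto; split; auto. split.
  + apply (ev_bigmeet Q); auto.
  + intros t Ht K. apply H2. apply (ev_bigjoin Q). eauto.
- intros [u [U [Hup [H1 H2]]]]. apply (diff_up _ _ _ _ U); auto.
  + apply (ev_bigmeet U); auto.
  + intro K. apply (ev_bigjoin U) in K. destruct K as [t [Ht K]]. apply (H2 t); auto.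
Qed.

Lemma matches_agree l pn u v : In pn (parts l) -> matches u pn -> matches v pn -> agree l u v.
Proof.
intros Hin [U1 U2] [V1 V2] t Ht. destruct (parts_cover _ _ Hin _ Ht) as [K|K].
- split; intros _; auto.
- split; intro H; [destruct (U2 t K H)|destruct (V2 t K H)].
Qed.

Lemma agree_sub l l' u v : (forall t, In t l -> In t l') -> agree l' u v -> agree l u v.
Proof. intros S A t Ht. apply A, S, Ht. Qed.

Lemma ident_step (l0 : list (term n)) (d : nat) (r : L -> Prop) :
  prime r -> ~ height_ge (S d) r ->
  (forall i (H : i < n), In (tVar H) l0) ->
  (forall u v, prime u -> prime v -> ~ height_ge d v -> agree l0 u v -> equiv u v) ->
  (forall v w, prime v -> ~ height_ge d v -> sub v r -> prime w -> agree l0 w r ->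
      exists u, prime u /\ sub u w /\ equiv u v) ->
  forall s, prime s -> agree (l0 ++ hint l0) s r -> equiv s r.
Proof.
intros R Hr Hvars H1 H2 s S Hs.
set (K := fun w => prime w /\ agree l0 w r /\ forall u, prime u -> sub u w ->
            exists v, prime v /\ sub v r /\ agree l0 u v).
assert (low : forall v, prime v -> sub v r -> ~ sub r v -> ~ height_ge d v).
{ intros v V Hvr Hrv Hv. apply Hr. simpl. exists v. split; [auto|split; [|auto]].
  split; [exact Hvr|]. apply NNPP; intro K'. apply Hrv. intros z Rz.
  apply NNPP; intro nv. apply K'. exists z; auto. }
assert (KS : K s).
{ split; [exact S|split].
  - apply agree_sub with (l0 ++ hint l0); [intros; apply in_or_app; left; auto| exact Hs].
  - intros u U Hus. destruct (parts_exist (fun t => u (ev t)) l0) as [pn [Hin [M1 M2]]].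
    assert (Hc : In (chi pn) (l0 ++ hint l0)) by (apply in_or_app; right; apply in_map; auto).
    assert (Cs : s (ev (chi pn))).
    { apply (chi_spec S). exists u; split; auto; split; auto; split; auto. }
    apply (Hs _ Hc) in Cs. apply (chi_spec R) in Cs. destruct Cs as [v [V [Hvr Mv]]].
    exists v; split; auto; split; auto. apply matches_agree with pn; auto. split; auto. }
assert (Main : forall t w, K w -> (w (ev t) <-> r (ev t))).
{ induction t as [i Hi| | |t1 IHt1 t2 IHt2|t1 IHt1 t2 IHt2|t1 IHt1 t2 IHt2];
    intros w Kw; pose proof Kw as [W [Wa Wb]]; simpl.
  - exact (Wa (tVar Hi) (Hvars i Hi)).
  - split; intro H; [destruct (pr_zero W H) | destruct (pr_zero R H)].
  - split; intros; [apply (pr_one R)|apply (pr_one W)].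
  - rewrite (pr_join_iff W), (pr_join_iff R), (IHt1 w Kw), (IHt2 w Kw). tauto.
  - rewrite (pr_meet_iff W), (pr_meet_iff R), (IHt1 w Kw), (IHt2 w Kw). tauto.
  - split.
    + intro H. destruct (diff_down _ _ _ W H) as [u [U [Huw [Uy Uz]]]].
      destruct (Wb u U Huw) as [v [V [Hvr Huv]]].
      destruct (classic (sub r v)) as [Hrv|Hrv].
      * assert (Ku : K u).
        { split; [exact U|split].
          - intros t Ht; rewrite (Huv t Ht); split; [apply Hvr|apply Hrv].
          - intros u' U' Hu'. apply Wb; auto. intros z Z; apply Huw, Hu', Z. }
        apply (diff_up _ _ _ _ R (fun z H => H)); [apply (IHt1 u Ku); auto | rewrite <- (IHt2 u Ku); auto].
      * assert (E := H1 u v U V (low v V Hvr Hrv) Huv).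
        apply (diff_up _ _ _ _ V Hvr); [apply E; auto | rewrite <- (E _); auto].
    + intro H. destruct (diff_down _ _ _ R H) as [v [V [Hvr [Vy Vz]]]].
      destruct (classic (sub r v)) as [Hrv|Hrv].
      * apply (diff_up _ _ _ _ W (fun z H => H)).
        -- apply (IHt1 w Kw). apply Hvr; auto.
        -- rewrite (IHt2 w Kw). intro K'. apply Vz, Hrv, K'.
      * destruct (H2 v w V (low v V Hvr Hrv) Hvr W Wa) as [u [U [Huw E]]].
        apply (diff_up _ _ _ _ U Huw); [apply E; auto| rewrite (E _); auto]. }
intro t. apply Main, KS.
Qed.

Lemma ident d : forall r s, prime r -> prime s -> ~ height_ge (S d) r ->
  agree (Lam n d) s r -> equiv s r.
Proof.
induction d; intros r s R Sp Hr Hs.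
- apply (ident_step vars 0 r R Hr); auto.
  + intros; apply vars_in.
  + intros u v _ _ H; destruct (H I).
  + intros v w _ H; destruct (H I).
- apply (ident_step (vars ++ Lam n d ++ hint (Lam n d)) (S d) r R Hr); auto.
  + intros; apply in_or_app; left; apply vars_in.
  + intros u v U V lw Huv. apply (IHd v u V U lw).
    apply agree_sub with (vars ++ Lam n d ++ hint (Lam n d)); [|exact Huv].
    intros t Ht; apply in_or_app; right; apply in_or_app; left; exact Ht.
  + intros v w V lw Hvr W Hwr.
    destruct (parts_exist (fun t => v (ev t)) (Lam n d)) as [pn [Hin [M1 M2]]].
    assert (Hc : In (chi pn) (vars ++ Lam n d ++ hint (Lam n d))).
    { apply in_or_app; right; apply in_or_app; right; apply in_map; auto. }
    assert (Cr : r (ev (chi pn))).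
    { apply (chi_spec R). exists v; split; auto; split; auto; split; auto. }
    apply (Hwr _ Hc) in Cr. apply (chi_spec W) in Cr. destruct Cr as [u [U [Huw Mu]]].
    exists u; split; auto; split; auto. apply (IHd v u V U lw).
    apply matches_agree with pn; auto. split; auto.
Qed.

Lemma E_spec (G : generated_by a) d : forall p, prime p -> (p (ev (E n d)) <-> height_ge d p).
Proof.
induction d; intros p P.
- simpl. split; intros; [exact I|apply (pr_one P)].
- simpl (E n (S d)). rewrite (ev_bigjoin P). split.
  + intros [t [Ht Hp]]. apply in_map_iff in Ht. destruct Ht as [pn [<- Hin]]. simpl in Hp.
    apply (pr_meet_iff P) in Hp. destruct Hp as [H1 H2].
    destruct (diff_down _ _ _ P H2) as [q [Q [Hqp [Qe Qn]]]].
    simpl. exists q. split; auto. split.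
    * split; [exact Hqp| exists (ev (bigjoin (snd pn))); auto].
    * apply IHd; auto.
  + intros [q [Q [[Hqp [x [px nqx]]] Hq]]].
    apply (IHd q Q) in Hq.
    destruct (min_prime q _ Q Hq) as [q' [Q' [Hq'q [Q'e Hmin]]]].
    assert (nh : ~ height_ge (S d) q').
    { simpl. intros [q'' [Q'' [[Hsub [z [q'z nq''z]]] Hh]]]. apply nq''z.
      apply (Hmin q'' Q''); auto. apply (IHd q'' Q''); auto. }
    destruct (parts_exist (fun t => q' (ev t)) (Lam n d)) as [pn [Hin [M1 M2]]].
    set (psi := bigjoin (snd pn)).
    assert (npsi : ~ q' (ev psi)).
    { intro K. apply (ev_bigjoin Q') in K. destruct K as [t [Ht K]]. apply (M2 t Ht K). }
    assert (ppsi : p (ev psi)).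
    { apply NNPP; intro K.
      assert (Ag : agree (Lam n d) p q').
      { intros t Ht. destruct (parts_cover _ _ Hin _ Ht) as [K1|K1].
        - split; intro; [apply M1; auto| apply Hqp, Hq'q; apply M1; auto].
        - split; intro K2; [exfalso; apply K; apply (ev_bigjoin P); exists t; auto| destruct (M2 t K1 K2)]. }
      assert (Eq := ident d q' p Q' P nh Ag).
      destruct (G x) as [tx <-]. apply nqx. apply Hq'q. apply Eq. exact px. }
    exists (tMeet psi (tDiff (E n d) psi)). split.
    * apply in_map_iff. exists pn; split; auto.
    * simpl. apply (pr_meet P); auto. apply (diff_up _ _ _ _ Q').
      -- intros z Hz; apply Hqp, Hq'q, Hz.
      -- exact Q'e.
      -- exact npsi.
Qed.

End Sem.

Theorem proposition8p2 :
  forall n d : nat, 0 < n -> 0 < d ->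
  exists t : term n,
    forall (L : coHeytingAlgebra) (a : forall i : nat, i < n -> L),
      generated_by a ->
      forall x : L, dL d x <-> le x (eval a t).
Proof.
intros n d _ _. exists (E n d). intros L a G x. unfold dL, codim_ge. split.
- intro H. apply NNPP; intro K. destruct (pft_le _ _ K) as [p [P [px npE]]].
  apply npE. apply (E_spec n L a G d p P). apply H; auto.
- intros Hle p P px. apply (E_spec n L a G d p P). apply (pr_up P x); auto.
Qed.
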